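(* Let $k>t+1$, $n>2k-t$, and let $\mathcal{S}_a$ be a maximal set of $k$-spaces in $\mathrm{AG}(n,q)$ pairwise intersecting in at least a $t$-space. Let $\psi(\mathcal{S}_a)=\min\{\dim T: T\text{ an affine subspace},\ \dim(T\cap\alpha)\geq t\ \forall\alpha\in\mathcal{S}_a\}$ and suppose $\psi(\mathcal{S}_a)=t+x$ with $x\geq 2$. Then for each $j\in\{0,1,\dots,x\}$, the number of elements of $\mathcal{S}_a$ containing any given affine $(t+x-j)$-space is at most $(\theta_{k-t})^j\left[{n-t-x\atop k-t-x}\right]_q$.
   Context: Affine subspaces intersect in at least a $t$-space if their affine intersection has dimension at least $t$. $\left[{n\atop k}\right]_q=\frac{(q^n-1)\cdots(q^{n-k+1}-1)}{(q^k-1)\cdots(q-1)}$ for $k>0$, $=1$ for $k=0$; $\theta_m=\frac{q^{m+1}-1}{q-1}$. Maximal means no further affine $k$-space can be added keeping the property. *)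

(* Defs.v *)
(* AG(n,q) is modelled as the vectors 'rV[F]_n over a finite field F, q = #|F|. *)
From HB Require Import structures.
From mathcomp Require Import all_boot all_order all_algebra all_field.
Set Implicit Arguments. Unset Strict Implicit. Unset Printing Implicit Defensive.
Import GRing.Theory.
Local Open Scope ring_scope.

Section AG.
Variables (F : finFieldType) (n : nat).
Local Notation pt := 'rV[F]_n.

Definition is_aff_space (A : {set pt}) (d : nat) : Prop :=
  exists (v : pt) (W : {vspace pt}), (\dim W = d)%N /\ A = [set x | (x - v) \in W].

Definition meet_ge (A B : {set pt}) (t : nat) : Prop :=
  exists d, (t <= d)%N /\ is_aff_space (A :&: B) d.

Definition t_intersecting (S : {set {set pt}}) (k t : nat) : Prop :=
  (forall A, A \in S -> is_aff_space A k) /\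
  (forall A B, A \in S -> B \in S -> A != B -> meet_ge A B t).

Definition maximal_t_intersecting (S : {set {set pt}}) (k t : nat) : Prop :=
  t_intersecting S k t /\
  (forall B, is_aff_space B k -> B \notin S -> ~ t_intersecting (B |: S) k t).

Definition psi_eq (S : {set {set pt}}) (t m : nat) : Prop :=
  (exists T, is_aff_space T m /\ forall A, A \in S -> meet_ge T A t) /\
  (forall T d, is_aff_space T d -> (forall A, A \in S -> meet_ge T A t) -> (m <= d)%N).

End AG.

Definition gauss_binom (q N K : nat) : nat :=
  ((\prod_(i < K) (q ^ (N - i) - 1)) %/ (\prod_(i < K) (q ^ i.+1 - 1)))%N.

Definition theta (q m : nat) : nat := (\sum_(i < m.+1) q ^ i)%N.

(* Main.v *)
Require Import Defs.
From HB Require Import structures.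
From mathcomp Require Import all_boot all_order all_algebra all_field zify.
From Stdlib Require Import Classical.
Set Implicit Arguments. Unset Strict Implicit. Unset Printing Implicit Defensive.
Import GRing.Theory.
Local Open Scope ring_scope.

Section Aff.
Variables (F : finFieldType) (n : nat).
Local Notation pt := 'rV[F]_n.
Implicit Types (u v a b p : pt) (W V D Y : {vspace pt}).

Definition aff u W : {set pt} := [set x | (x - u) \in W].

Lemma affE u W x : (x \in aff u W) = (x - u \in W).
Proof. by rewrite inE. Qed.

Lemma aff_base u W : u \in aff u W.
Proof. by rewrite affE subrr mem0v. Qed.

Lemma aff_rebase u W p : p \in aff u W -> aff p W = aff u W.
Proof.
rewrite affE => hp; apply/setP=> x; rewrite !affE.
have -> : x - p = (x - u) - (p - u) by rewrite opprB addrA subrK.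
by rewrite rpredBr.
Qed.

Lemma aff_subP u W a V : aff u W \subset aff a V -> (W <= V)%VS /\ u - a \in V.
Proof.
move=> /subsetP hs; have hu : u - a \in V by rewrite -affE hs ?aff_base.
split=> //; apply/subvP=> w hw.
have : u + w \in aff a V by apply: hs; rewrite affE addrC addKr.
rewrite affE => h.
have -> : w = (u + w - a) - (u - a) by rewrite opprB addrA subrK addrC addKr.
exact: rpredB.
Qed.

Lemma aff_sub u W a V : u \in aff a V -> (W <= V)%VS -> aff u W \subset aff a V.
Proof.
move=> hu /subvP hWV; apply/subsetP=> x; rewrite !affE => hx.
have -> : x - a = (x - u) + (u - a) by rewrite addrA subrK.
by rewrite rpredD ?(hWV _ hx) // -affE.
Qed.

Lemma aff_inj u W V : aff u W = aff u V -> W = V.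
Proof.
move=> e; apply/subv_anti/andP; split.
  by case: (@aff_subP u W u V); rewrite ?e ?subxx.
by case: (@aff_subP u V u W); rewrite ?e ?subxx.
Qed.

Lemma aff_dim X d u W : is_aff_space X d -> X = aff u W -> d = \dim W.
Proof.
case=> v [W' [hd eX]] eX'; rewrite -hd.
have hu : u \in aff v W' by rewrite /aff -eX eX' aff_base.
have e : aff u W' = aff u W by rewrite (aff_rebase hu) /aff -eX.
by rewrite (aff_inj e).
Qed.

Lemma aff_is u W : is_aff_space (aff u W) (\dim W).
Proof. by exists u, W. Qed.

Lemma aff_cap p u W a V : p \in aff u W -> p \in aff a V ->
  aff u W :&: aff a V = aff p (W :&: V)%VS.
Proof.
move=> h1 h2; rewrite -(aff_rebase h1) -(aff_rebase h2).
by apply/setP=> x; rewrite !inE memv_cap.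
Qed.

Lemma aff_of X d : is_aff_space X d -> exists u W, X = aff u W /\ \dim W = d.
Proof. by case=> v [W [hd eX]]; exists v, W. Qed.

Lemma meet_geE u W a V t : meet_ge (aff u W) (aff a V) t <->
  exists p, [/\ p \in aff u W, p \in aff a V & (t <= \dim (W :&: V))%N].
Proof.
split.
  case=> d [htd hX]; case: (hX) => v [W' [_ eX]].
  have hv : v \in aff u W :&: aff a V by rewrite eX; exact: aff_base.
  move: hv; rewrite inE => /andP[h1 h2]; exists v; split => //.
  by rewrite -(aff_dim hX (aff_cap h1 h2)).
case=> p [h1 h2 ht]; exists (\dim (W :&: V)); split => //.
by rewrite (aff_cap h1 h2); apply: aff_is.
Qed.

Lemma dim_addline W y : y \notin W -> \dim (W + <[y]>)%VS = (\dim W).+1.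
Proof.
move=> hy.
have hy0 : y != 0 by apply: contraNneq hy => ->; rewrite mem0v.
have hc : (W :&: <[y]> = 0)%VS.
  apply/eqP; rewrite -subv0; apply/subvP=> z; rewrite memv_cap memv0 => /andP[hz /vlineP[c ez]].
  apply/negPn/negP=> hz0; move: hy; rewrite (_ : y = c^-1 *: z) ?rpredZ //.
  have hc0 : c != 0 by apply: contraNneq hz0 => hc; rewrite ez hc scale0r.
  by rewrite ez scalerA mulVf // scale1r.
have := dimv_sum_cap W <[y]>; rewrite hc dimv0 dim_vline hy0 addn0 => ->.
by rewrite addn1.
Qed.

Lemma card_vs W : #|[set y | y \in W]| = (#|F| ^ \dim W)%N.
Proof. by rewrite cardsE card_vspace. Qed.

Lemma card_vsdiff D Y : (D <= Y)%VS ->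
  #|[set y | (y \in Y) && (y \notin D)]| = (#|F| ^ \dim Y - #|F| ^ \dim D)%N.
Proof.
move=> /subvP hDY.
have := cardsID [set y | y \in D] [set y | y \in Y].
have -> : [set y | y \in Y] :&: [set y | y \in D] = [set y | y \in D].
  by apply/setP=> y; rewrite !inE andb_idl //; apply: hDY.
have -> : [set y | y \in Y] :\: [set y | y \in D] = [set y | (y \in Y) && (y \notin D)].
  by apply/setP=> y; rewrite !inE andbC.
rewrite !card_vs => <-; by rewrite addKn.
Qed.

Lemma vs_ext D V r : (D <= V)%VS -> (\dim D <= r <= \dim V)%N ->
  exists Y, [/\ (D <= Y)%VS, (Y <= V)%VS & \dim Y = r].
Proof.
move=> hDV /andP[h1 h2].
have [i ei] : exists i, r = (\dim D + i)%N by exists (r - \dim D)%N; lia.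
rewrite ei in h2 *; clear ei h1.
elim: i h2 => [|i IH] h2.
  by exists D; rewrite subvv hDV addn0.
have [|Y [h1' h2' h3']] := IH; first lia.
have : ~~ (V <= Y)%VS.
  apply/negP => hVY; have := dimvS hVY. lia.
case/subvPn => v hv hvY; exists (Y + <[v]>)%VS; split.
- exact: subv_trans h1' (addvSl _ _).
- by rewrite subv_add h2' -memvE.
- by rewrite dim_addline // h3' addnS.
Qed.

Lemma block D Vs s : (D <= Vs)%VS -> (s <= \dim Vs)%N ->
 exists Y, [/\ (D <= Y)%VS, (Y <= Vs)%VS, (\dim Y <= \dim D + (\dim Vs - s) + 1)%N &
   forall X, (D <= X)%VS -> (X <= Vs)%VS -> (s <= \dim X)%N -> ~~ (X <= D)%VS ->
     ~~ (Y :&: X <= D)%VS].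
Proof.
move=> hD hs; case: (ltnP (\dim D) s) => he.
  have [|Y [h1 h2 h3]] := @vs_ext D Vs (\dim Vs - s + \dim D + 1)%N hD; first lia.
  exists Y; split => //; first lia.
  move=> X hDX hXV hsX _; apply/negP => hc.
  have := dimv_sum_cap Y X; have := dimvS hc.
  have : (\dim (Y + X) <= \dim Vs)%N by apply: dimvS; rewrite subv_add h2.
  lia.
exists Vs; split => //; first lia.
by move=> X _ hXV _ hX; rewrite (capv_idPr hXV).
Qed.

Lemma dcount (T : finType) (S : {set {set T}}) (U : {set T}) (Ys : {set T})
  (g : T -> {set T}) (c : nat) :
 (forall B, B \in S -> U \subset B -> (c <= #|[set y in Ys | g y \subset B]|)%N) ->
 (c * #|[set B in S | U \subset B]| <= \sum_(y in Ys) #|[set B in S | g y \subset B]|)%N.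
Proof.
move=> H; rewrite mulnC -sum_nat_const.
apply: (@leq_trans (\sum_(B in [set B in S | U \subset B]) \sum_(y in Ys) (g y \subset B : nat))).
  apply: leq_sum => B; rewrite inE => /andP[hB hU]; apply: leq_trans (H B hB hU) _.
  rewrite -sum1_card big_mkcond [X in (_ <= X)%N]big_mkcond /=.
  by apply: leq_sum => y _; rewrite !inE; case: (y \in Ys); case: (g y \subset B).
rewrite exchange_big /=; apply: leq_sum => y _.
rewrite -sum1_card big_mkcond [X in (_ <= X)%N]big_mkcond /=.
by apply: leq_sum => B _; rewrite !inE; case: (B \in S); case: (U \subset B); case: (g y \subset B).
Qed.

Lemma thetaE q m : (0 < q)%N -> (q.-1 * theta q m = q ^ m.+1 - 1)%N.
Proof.
move=> hq; elim: m => [|m IH].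
  by rewrite /theta big_ord1 expn0 muln1 expn1 subn1.
rewrite /theta big_ord_recr /= -/(theta q m) mulnDr IH.
have h1 : (0 < q ^ m.+1)%N by rewrite expn_gt0 hq.
rewrite [(q ^ m.+2)%N]expnS.
nia.
Qed.

End Aff.

Definition Qp q i := (\prod_(l < i) (q ^ l.+1 - 1))%N.
Definition Pp q a i := (\prod_(l < i) (q ^ (a - l) - 1))%N.

Lemma expB q a b : (a <= b)%N -> (q ^ b - q ^ a = q ^ a * (q ^ (b - a) - 1))%N.
Proof. by move=> h; rewrite mulnBr muln1 -expnD subnKC. Qed.

Section Base.
Variables (F : finFieldType) (n : nat).
Local Notation pt := 'rV[F]_n.
Implicit Types (u v a b p : pt) (W V D Y X : {vspace pt}).
Variables (S : {set {set pt}}) (k : nat).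
Hypothesis hS : forall B, B \in S -> is_aff_space B k.
Local Notation q := #|F|.
Local Notation N U := #|[set B in S | U \subset B]|.

Lemma q_gt1 : (1 < q)%N.
Proof. exact: finNzRing_gt1. Qed.

Lemma dimf : \dim (fullv : {vspace pt}) = n.
Proof. by rewrite dimvf dim_matrix mul1r. Qed.

Lemma coverB u W B : B \in S -> aff u W \subset B ->
  exists WB, [/\ B = aff u WB, (W <= WB)%VS & \dim WB = k].
Proof.
move=> hB hU; have [b [WB [eB hd]]] := aff_of (hS hB).
rewrite eB in hU; have [hW hu] := aff_subP hU.
exists WB; split => //.
by rewrite eB (aff_rebase (_ : u \in aff b WB)) // affE.
Qed.

Lemma base_count i : forall u W, (\dim W + i = k)%N ->
  (N (aff u W) * Qp q i <= Pp q (n - \dim W) i)%N.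
Proof.
elim: i => [|i IH] u W hk.
  rewrite /Qp /Pp !big_ord0 muln1.
  have -> : [set B in S | aff u W \subset B] = [set B in S | aff u W \subset B] :&: [set aff u W].
    apply/setP=> B; rewrite !inE; case hB: (B \in S) => //=.
    case hU: (aff u W \subset B) => //=; apply/esym/eqP.
    have [WB [eB hW hd]] := coverB hB hU.
    rewrite eB; congr aff; apply/eqP; rewrite eq_sym eqEdim hW; lia.
  by rewrite (leq_trans (subset_leq_card (subsetIr _ _))) // cards1.
set Ys := [set y : pt | (y \in fullv) && (y \notin W)].
have hq0 : (0 < q)%N by have := q_gt1; lia.
have hWn : (\dim W <= n)%N by have := dimvS (subvf W); rewrite dimf.
have hcB : forall B, B \in S -> aff u W \subset B ->
    (q ^ k - q ^ \dim W <= #|[set y in Ys | aff u (W + <[y]>) \subset B]|)%N.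
  move=> B hB hU; have [WB [eB hW hd]] := coverB hB hU.
  rewrite -hd -card_vsdiff //; apply: subset_leq_card; apply/subsetP => y.
  rewrite !inE memvf /= => /andP[hy hyW]; rewrite hyW /= eB.
  by apply: aff_sub; rewrite ?aff_base // subv_add hW -memvE.
have hc := @dcount _ S (aff u W) Ys (fun y => aff u (W + <[y]>)) _ hcB.
have hsum : ((\sum_(y in Ys) N (aff u (W + <[y]>))) * Qp q i <= #|Ys| * Pp q (n - (\dim W).+1) i)%N.
  rewrite big_distrl /= -sum_nat_const; apply: leq_sum => y.
  rewrite inE => /andP[_ hy]; have := IH u (W + <[y]>)%VS; rewrite dim_addline //.
  by apply; lia.
have := leq_trans (leq_mul hc (leqnn (Qp q i))) hsum.
rewrite /Ys card_vsdiff ?subvf // dimf -hk expB ?leq_addr // expB //.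
rewrite -!mulnA leq_pmul2l ?expn_gt0 ?hq0 // => h.
rewrite /Qp big_ord_recr /= -/(Qp q i) /Pp big_ord_recl /= subn0.
have -> : (\prod_(l < i) (q ^ (n - \dim W - bump 0 l) - 1) = Pp q (n - (\dim W).+1) i)%N.
  by apply: eq_bigr => l _; congr (q ^ _ - 1)%N; rewrite /bump /=; lia.
move: h; have -> : (\dim W + i.+1 - \dim W = i.+1)%N by lia.
move=> h'; apply: leq_trans h'; rewrite mulnCA mulnC -mulnA mulnCA; apply: eq_leq; reflexivity.
Qed.

End Base.

Section Step.
Variables (F : finFieldType) (n : nat).
Local Notation pt := 'rV[F]_n.
Implicit Types (u v a b p : pt) (W V D Y X : {vspace pt}).
Variables (S : {set {set pt}}) (k t : nat).
Hypothesis hS : forall B, B \in S -> is_aff_space B k.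
Local Notation q := #|F|.
Local Notation N U := #|[set B in S | U \subset B]|.

Lemma step_core u W Vs s M : (s <= \dim Vs)%N -> (\dim Vs - s <= k - t)%N ->
  (forall B, B \in S -> aff u W \subset B -> exists WB,
     [/\ B = aff u WB, (W <= WB)%VS, (s <= \dim (WB :&: Vs))%N &
         ~~ (WB :&: Vs <= W :&: Vs)%VS]) ->
  (forall y, y \notin W -> (N (aff u (W + <[y]>)) <= M)%N) ->
  (N (aff u W) <= theta q (k - t) * M)%N.
Proof.
move=> hs hK hB hM.
set D := (W :&: Vs)%VS.
have [Y [hDY hYV hdY hbl]] := block (capvSr W Vs) hs.
set Ys := [set y | (y \in Y) && (y \notin D)].
have hq1 := q_gt1 F; have hq0 : (0 < q)%N by lia.
have hcB : forall B, B \in S -> aff u W \subset B ->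
    (q ^ (\dim D).+1 - q ^ \dim D <= #|[set y in Ys | aff u (W + <[y]>) \subset B]|)%N.
  move=> B hB' hU; have [WB [eB hW hsX hnX]] := hB B hB' hU.
  set X := (WB :&: Vs)%VS.
  have hDX : (D <= X)%VS by apply: capvS.
  have hnZ := hbl X hDX (capvSr _ _) hsX hnX.
  have hDZ : (D <= Y :&: X)%VS by rewrite subv_cap hDY hDX.
  have hlt : (\dim D < \dim (Y :&: X))%N by rewrite (ltn_leqif (dimv_leqif_sup hDZ)).
  apply: (@leq_trans (q ^ \dim (Y :&: X) - q ^ \dim D)%N).
    by apply: leq_sub2r; rewrite leq_pexp2l.
  rewrite -card_vsdiff //; apply: subset_leq_card; apply/subsetP => y.
  rewrite !inE => /andP[]; rewrite memv_cap => /andP[hyY hyX] hyD.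
  rewrite hyY hyD /= eB; apply: aff_sub; rewrite ?aff_base // subv_add hW -memvE.
  by move: hyX; rewrite memv_cap => /andP[].
have hc := @dcount _ S (aff u W) Ys (fun y => aff u (W + <[y]>)) _ hcB.
have hsum : (\sum_(y in Ys) N (aff u (W + <[y]>)) <= #|Ys| * M)%N.
  rewrite -sum_nat_const; apply: leq_sum => y; rewrite inE => /andP[hyY hyD].
  apply: hM; apply: contra hyD => hyW; rewrite memv_cap hyW /=.
  exact: (subvP hYV).
have := leq_trans hc hsum.
rewrite /Ys card_vsdiff // expB // expB ?dimvS // subSnn expn1.
have hDY' := dimvS hDY.
have h2 : (q ^ (\dim Y - \dim D) - 1 <= q.-1 * theta q (k - t))%N.
  rewrite thetaE //; apply: leq_sub2r; rewrite leq_pexp2l //; move: hdY hDY' hK; rewrite /D; set e := \dim (W :&: Vs); move: (\dim Y) e (\dim Vs) => y0 e0 v0. lia.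
move=> h; rewrite -(@leq_pmul2l (q ^ \dim D * q.-1)) ?muln_gt0 ?expn_gt0 ?hq0 //; last lia.
apply: leq_trans.
  apply: (leq_trans _ h); rewrite -subn1 //.
rewrite -!mulnA leq_pmul2l ?expn_gt0 ?hq0 // mulnA.
by apply: leq_mul.
Qed.

End Step.

Section Step2.
Variables (F : finFieldType) (n : nat).
Local Notation pt := 'rV[F]_n.
Implicit Types (u v a b p : pt) (W V D Y X : {vspace pt}).
Variables (S : {set {set pt}}) (k t : nat).
Hypothesis hS : forall B, B \in S -> is_aff_space B k.
Hypothesis hP : forall A B, A \in S -> B \in S -> A != B -> meet_ge A B t.
Hypothesis htk : (t <= k)%N.
Local Notation q := #|F|.
Local Notation N U := #|[set B in S | U \subset B]|.

Lemma step u W A M : A \in S -> ~ meet_ge (aff u W) A t -> (t <= \dim W)%N ->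
  (forall y, y \notin W -> (N (aff u (W + <[y]>)) <= M)%N) ->
  (N (aff u W) <= theta q (k - t) * M)%N.
Proof.
move=> hA hnm htW hM.
have [a [V [eA hV]]] := aff_of (hS hA); subst A.
have hcov : forall B, B \in S -> aff u W \subset B -> exists WB,
   [/\ B = aff u WB, (W <= WB)%VS & exists p,
     [/\ p \in aff u WB, p \in aff a V & (t <= \dim (WB :&: V))%N]].
  move=> B hB hU; have [WB [eB hW _]] := @coverB _ _ S k hS _ _ _ hB hU.
  exists WB; split => //; apply/meet_geE; rewrite -eB.
  apply: hP => //; apply/negP => /eqP eBA; apply: hnm.
  apply/meet_geE; exists u; split; rewrite ?aff_base // -?eBA ?eB ?aff_base //.
  by move: hU; rewrite eBA => /aff_subP[hWV _]; rewrite (capv_idPl hWV).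
case: (boolP [exists p0, (p0 \in aff u W) && (p0 \in aff a V)]).
  case/existsP => p0 /andP[hp0U hp0A].
  have hD : (\dim (W :&: V) < t)%N.
    rewrite ltnNge; apply/negP => h; apply: hnm; apply/meet_geE; exists p0; split => //.
  apply: (@step_core F n S k t u W V t M) => //; rewrite ?hV ?subnn //.
  move=> B hB hU; have [WB [eB hW [p [hpB hpA ht]]]] := hcov B hB hU.
  exists WB; split => //; apply/negP => hs; have := dimvS hs; lia.
move=> hno.
set c := a - u.
have hcV : c \notin V.
  apply: contra hno => hc; apply/existsP; exists u; rewrite aff_base affE /=.
  by rewrite -opprB rpredN.
have hdVs : \dim (V + <[c]>)%VS = k.+1 by rewrite dim_addline // hV.
apply: (@step_core F n S k t u W (V + <[c]>)%VS t.+1 M) => //; first lia; first lia.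
move=> B hB hU; have [WB [eB hW [p [hpB hpA ht]]]] := hcov B hB hU.
set z := p - u.
have hzWB : z \in WB by rewrite -affE.
have hzVs : z \in (V + <[c]>)%VS.
  have -> : z = (p - a) + c by rewrite /z /c addrA subrK.
  by rewrite memv_add ?memv_line // -affE.
have hzV : z \notin V.
  apply: contra hcV => hz; have -> : c = z - (p - a) by rewrite /z /c opprB [RHS]addrC addrA subrK.
  by rewrite rpredB // -affE.
have hzW : z \notin W.
  apply: contra hno => hz; apply/existsP; exists p; rewrite hpA andbT affE //.
exists WB; split => //.
  have hsub : ((WB :&: V) + <[z]> <= WB :&: (V + <[c]>))%VS.
    rewrite subv_add -memvE memv_cap hzWB hzVs andbT.
    rewrite andbT; apply: capvS; [exact: subvv | exact: addvSl].
  have := dimvS hsub; rewrite dim_addline; last by rewrite memv_cap negb_and hzV orbT.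
  exact: leq_ltn_trans ht.
apply/subvPn; exists z; first by rewrite memv_cap hzWB.
by rewrite memv_cap negb_and hzW.
Qed.
End Step2.

Lemma Qp_gt0 q i : (1 < q)%N -> (0 < Qp q i)%N.
Proof.
move=> hq; rewrite /Qp; apply: prodn_gt0 => l.
by rewrite subn_gt0 -{1}(expn0 q) ltn_exp2l.
Qed.


Local Close Scope ring_scope.

Theorem mainTheorem12 (F : finFieldType) (n k t x : nat)
  (S : {set {set 'rV[F]_n}}) :
  (t.+1 < k)%N -> (2 * k - t < n)%N ->
  maximal_t_intersecting S k t ->
  psi_eq S t (t + x) -> (2 <= x)%N ->
  forall j : nat, (j <= x)%N ->
  forall U : {set 'rV[F]_n}, is_aff_space U (t + x - j) ->
  (#|[set A in S | U \subset A]| <=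
     theta #|F| (k - t) ^ j * gauss_binom #|F| (n - t - x) (k - t - x))%N.
Proof.
move=> hkt _ [[hSk hSp] _] [_ hpsi] hx.
have htk : (t <= k)%N by lia.
elim=> [|j IH] hj U hU; have [u [W [eU hW]]] := aff_of hU; subst U.
  rewrite expn0 mul1n.
  case: (leqP (t + x) k) => htxk.
    have := @base_count F n S k hSk (k - (t + x)) u W.
    rewrite hW subn0 => /(_ ltac:(lia)) h.
    rewrite /gauss_binom leq_divRL; last by apply: Qp_gt0; apply: (@q_gt1 F).
    by move: h; rewrite /Qp /Pp -!subnDA.
  suff -> : [set B in S | aff u W \subset B] = set0 by rewrite cards0.
  apply/setP => B; rewrite !inE; apply/negP => /andP[hB hUB].
  have [WB [_ hWB hd]] := coverB hSk hB hUB.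
  have := dimvS hWB; rewrite hW hd subn0; lia.
have [A hA hnm] : exists2 A, A \in S & ~ meet_ge (aff u W) A t.
  apply: NNPP => hne.
  have := hpsi (aff u W) (t + x - j.+1) hU; rewrite leqNgt.
  have -> : (t + x - j.+1 < t + x)%N by lia.
  move=> h; apply: notF; apply: h => A hA; apply: NNPP => hm; apply: hne.
  by exists A.
have := @step F n S k t hSk hSp htk u W A (theta #|F| (k - t) ^ j * gauss_binom #|F| (n - t - x) (k - t - x))%N hA hnm.
rewrite hW expnS -mulnA; apply; first lia.
move=> y hy; apply: IH; first lia.
have -> : (t + x - j = (\dim (W + <[y]>)%VS))%N by rewrite dim_addline // hW; lia.
exact: aff_is.
Qed.
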